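(* Let $N \in \mathbb{N}$, $\beta>0$ and $h\in\mathbb{R}$. Let $(g_{ij})_{1\le i<j\le N}$ be independent centered Gaussian random variables with variance $1/N$, extended to a symmetric matrix by $g_{ji}=g_{ij}$ and $g_{ii}=0$. Define the quenched finite-volume free energy \[ N f_N(\beta,h) = \log E_o\left[\exp\left(\beta H_N(\sigma) + h\sum_{i=1}^N \sigma_i\right)\right], \qquad H_N(\sigma)=\sum_{1\le i<j\le N} g_{ij}\sigma_i\sigma_j = \frac12\sum_{i,j=1}^N g_{ij}\sigma_i\sigma_j, \] where $E_o$ denotes expectation with respect to the uniform probability measure $P_o(\sigma)=2^{-N}$ on $\Sigma_N=\{-1,+1\}^N$. For each fixed realization of the matrix $(g_{ij})$, let $\mathsf{X}=(\mathsf{X}_i)_{i=1}^N$ be a centered Gaussian random vector (independent of everything else, with expectation denoted $\mathsf{E}$) with covariance \[ \mathsf{E}\,\mathsf{X}_i\mathsf{X}_j = \begin{cases} \sum_{k=1}^N |g_{ik}|, & i=j,\\ g_{ij}, & i\neq j.\end{cases} \] Then \[ N f_N(\beta,h) = \log \mathsf{E}\exp\left(\sum_{i=1}^N \log\cosh\left(h+\sqrt{\beta}\,\mathsf{X}_i\right)\right) - \frac{\beta}{2}\sum_{i,j=1}^N |g_{ij}|. \]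
   Context: This is the Sherrington–Kirkpatrick spin glass model. The disorder $(g_{ij})$ is quenched: the identity is asserted for each fixed realization of the matrix $(g_{ij})$, with $\mathsf{E}$ the expectation only over the auxiliary Gaussian field $\mathsf{X}$ (whose covariance depends on the realization of $(g_{ij})$). *)

(* Defs.v *)
From HB Require Import structures.
From mathcomp Require Import all_boot all_order all_algebra.
From mathcomp Require Import all_classical all_reals all_analysis.
Set Implicit Arguments. Unset Strict Implicit. Unset Printing Implicit Defensive.
Import Order.TTheory GRing.Theory Num.Theory.
Local Open Scope classical_set_scope.
Local Open Scope ring_scope.

Definition spin {R : realType} (b : bool) : R := if b then 1 else -1.

Definition SK_H {R : realType} (N : nat) (g : 'M[R]_N) (s : {ffun 'I_N -> bool}) : R :=
  \sum_(i < N) \sum_(j < N | (i < j)%N) g i j * spin (s i) * spin (s j).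

Definition NfN {R : realType} (N : nat) (g : 'M[R]_N) (beta h : R) : R :=
  ln (\sum_(s : {ffun 'I_N -> bool})
        (2 ^+ N)^-1 * expR (beta * SK_H g s + h * \sum_(i < N) spin (s i))).

Definition logcosh {R : realType} (x : R) : R := ln ((expR x + expR (- x)) / 2).

Definition SK_cov {R : realType} (N : nat) (g : 'M[R]_N) : 'M[R]_N :=
  \matrix_(i < N, j < N) (if i == j then \sum_(k < N) `|g i k| else g i j).

(* X : Omega -> R^N is a centered Gaussian vector with covariance C:
   each coordinate is measurable and every linear combination <u,X> is
   centered normal with variance u^T C u (the Dirac mass at 0 when the
   variance vanishes). [normal_prob m s] has standard deviation s. *)
Definition centered_gaussian_vector {R : realType} (d : measure_display)
  (Omega : measurableType d) (P : probability Omega R) (N : nat)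
  (C : 'M[R]_N) (X : Omega -> 'I_N -> R) : Prop :=
  (forall i, measurable_fun setT (fun w => X w i)) /\
  forall u : 'I_N -> R,
    let v := \sum_(i < N) \sum_(j < N) u i * C i j * u j in
    forall A : set R, measurable A ->
      P ((fun w => \sum_(i < N) u i * X w i) @^-1` A) =
      (if v == 0 then \d_(0 : R) A else normal_prob 0 (Num.sqrt v) A).

(* Main.v *)
Require Import Defs.
From HB Require Import structures.
From mathcomp Require Import all_boot all_order all_algebra.
From mathcomp Require Import all_classical all_reals all_analysis.
From mathcomp Require Import ring lra.
From mathcomp Require Import measurable_realfun.
Import Order.TTheory GRing.Theory Num.Theory.
Local Open Scope classical_set_scope.
Local Open Scope ring_scope.

Section mgf.
Context {R : realType}.
Notation mu := (@lebesgue_measure R).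

Lemma normal_mgf_aux (s : R) : s != 0 ->
  (\int[mu]_y ((expR y)%:E * (normal_pdf 0 s y)%:E) = (expR (s ^+ 2 / 2))%:E)%E.
Proof.
move=> s0.
transitivity (\int[mu]_y ((expR (s ^+ 2 / 2))%:E * (normal_pdf (s ^+ 2) s y)%:E))%E.
  apply: eq_integral => y _; rewrite -!EFinM; congr EFin.
  rewrite /normal_pdf (negbTE s0) mulrCA [RHS]mulrCA; congr (_ * _).
  rewrite /normal_fun -!expRD; congr expR.
  by field.
rewrite -[RHS]mule1 -(integral_normal_pdf (s ^+ 2) s).
apply: ge0_integralZl => //.
- by apply/measurable_EFinP; exact: measurable_normal_pdf.
- by move=> y _; rewrite lee_fin normal_pdf_ge0.
Qed.

Lemma normal_mgf (s : R) : s != 0 ->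
  (\int[normal_prob 0 s]_y (expR y)%:E = (expR (s ^+ 2 / 2))%:E)%E.
Proof.
move=> s0.
have dom := @normal_prob_dominates R 0 s.
rewrite -(Radon_Nikodym_SigmaFinite.change_of_variables dom); last 3 first.
- by move=> y; rewrite lee_fin expR_ge0.
- exact: measurableT.
- by apply/measurable_EFinP; exact: measurable_expR.
rewrite -(normal_mgf_aux _ s0).
apply: ae_eq_integral => //.
- apply: emeasurable_funM; first by apply/measurable_EFinP; exact: measurable_expR.
  apply: measurable_int.
  exact: Radon_Nikodym_SigmaFinite.f_integrable.
- apply: emeasurable_funM; first by apply/measurable_EFinP; exact: measurable_expR.
  by apply/measurable_EFinP; exact: measurable_normal_pdf.
apply: ae_eqe_mul2l.
apply: integral_ae_eq => //.
- exact: Radon_Nikodym_SigmaFinite.f_integrable.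
- by apply/measurable_EFinP; exact: measurable_normal_pdf.
move=> E _ mE.
by rewrite -Radon_Nikodym_SigmaFinite.f_integral.
Qed.
End mgf.

Lemma gauss_lin_mgf (R : realType) (N : nat) (C : 'M[R]_N)
  (d : measure_display) (Omega : measurableType d) (P : probability Omega R)
  (X : Omega -> 'I_N -> R) (u : 'I_N -> R) :
  centered_gaussian_vector P C X ->
  0 <= \sum_(i < N) \sum_(j < N) u i * C i j * u j ->
  (\int[P]_w (expR (\sum_(i < N) u i * X w i))%:E)%E =
  (expR ((\sum_(i < N) \sum_(j < N) u i * C i j * u j) / 2))%:E.
Proof.
move=> [mX hX] v0.
set Y := fun w => \sum_(i < N) u i * X w i.
have mY : measurable_fun setT Y.
  apply: measurable_sum => i; apply: measurable_funM => //.
pose v := \sum_(i < N) \sum_(j < N) u i * C i j * u j.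
have hv : forall A : set R, measurable A -> P (Y @^-1` A) =
   (if v == 0 then \d_(0 : R) A else normal_prob 0 (Num.sqrt v) A) := hX u.
rewrite -/v.
pose Yr : Omega -> measurableTypeR R := Y.
have mYr : measurable_fun setT Yr by exact: mY.
have mexp : measurable_fun (@setT (measurableTypeR R)) (fun y : measurableTypeR R => (expR y)%:E).
  by apply/measurable_EFinP; exact: measurable_expR.
have -> : (\int[P]_w (expR (Y w))%:E = \int[pushforward P Yr]_y (expR y)%:E)%E.
  by rewrite (ge0_integral_pushforward mYr).
move: hv; have [v0'|vn0] := eqVneq v 0 => hv.
  rewrite (@eq_measure_integral _ _ _ setT (\d_(0:measurableTypeR R))); last first.
    by move=> A mA _; exact: (hv A mA).
  rewrite integral_dirac //.
  by rewrite diracT mul1e v0' mul0r expR0.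
rewrite (@eq_measure_integral _ _ _ setT (normal_prob 0 (Num.sqrt v))); last first.
  by move=> A mA _; exact: (hv A mA).
rewrite normal_mgf; first by rewrite sqr_sqrtr.
by rewrite sqrtr_eq0 -ltNge lt_neqAle eq_sym vn0.
Qed.

Lemma spin_sq {R : realType} (b : bool) : spin b * spin b = 1 :> R.
Proof. by case: b; rewrite /spin ?mulr1 ?mulrNN ?mulr1. Qed.

Lemma norm_spin {R : realType} (b : bool) : `|spin b| = 1 :> R.
Proof. by case: b; rewrite /spin ?normrN normr1. Qed.

Lemma expR_logcosh_sum {R : realType} (N : nat) (x : 'I_N -> R) :
  expR (\sum_(i < N) logcosh (x i)) =
  \sum_(s : {ffun 'I_N -> bool}) (2 ^+ N)^-1 * expR (\sum_(i < N) spin (s i) * x i).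
Proof.
rewrite expR_sum.
transitivity (\prod_(i < N) \sum_(b : bool) (expR (spin b * x i) / 2)).
  apply: eq_bigr => i _; rewrite /logcosh lnK; last first.
    by rewrite posrE divr_gt0 ?addr_gt0 ?expR_gt0.
  by rewrite big_bool /spin /= mul1r mulN1r mulrDl addrC.
rewrite bigA_distr_bigA /=; apply: eq_bigr => s _.
by rewrite big_split /= -expR_sum prodr_const card_ord mulrC exprVn.
Qed.

Section quad.
Context {R : realType} (N : nat) (g : 'M[R]_N).
Hypothesis gs : forall i j, g j i = g i j.
Hypothesis gd : forall i, g i i = 0.

Lemma quad1 (s : {ffun 'I_N -> bool}) (i : 'I_N) :
  \sum_(j < N) spin (s i) * SK_cov g i j * spin (s j) =
  \sum_(j < N) `|g i j| + \sum_(j < N) g i j * spin (s i) * spin (s j).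
Proof.
rewrite (bigD1 i) //= [in X in _ = _ + X](bigD1 i) //= gd !mul0r add0r.
rewrite !mxE eqxx mulrC mulrA spin_sq mul1r; congr (_ + _).
apply: eq_bigr => j ji; rewrite mxE eq_sym (negbTE ji); ring.
Qed.

Lemma quad2 (s : {ffun 'I_N -> bool}) :
  \sum_(i < N) \sum_(j < N) g i j * spin (s i) * spin (s j) = 2 * SK_H g s.
Proof.
pose F i j := g i j * spin (s i) * spin (s j) : R.
pose G i j := F i j * (i < j)%N%:R.
have FG i j : F i j = G i j + G j i.
  rewrite /G /F; case: (ltngtP i j) => [ij|ji|/val_inj ->].
  - by rewrite mulr1 mulr0 addr0.
  - by rewrite mulr1 mulr0 add0r gs; ring.
  - by rewrite gd !mul0r addr0.
transitivity (\sum_(i < N) \sum_(j < N) G i j + \sum_(i < N) \sum_(j < N) G j i).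
  rewrite -big_split; apply: eq_bigr => i _; rewrite -big_split.
  by apply: eq_bigr => j _; exact: FG.
rewrite [X in _ + X]exchange_big /= -mulr2n mulr_natl; congr (_ *+ 2).
rewrite /SK_H; apply: eq_bigr => i _.
rewrite [RHS]big_mkcond /=; apply: eq_bigr => j _; rewrite /G /F.
by case: ifP => _; rewrite ?mulr1 ?mulr0.
Qed.

Lemma quad (s : {ffun 'I_N -> bool}) :
  \sum_(i < N) \sum_(j < N) spin (s i) * SK_cov g i j * spin (s j) =
  \sum_(i < N) \sum_(j < N) `|g i j| + 2 * SK_H g s.
Proof.
rewrite -quad2 -big_split; apply: eq_bigr => i _; exact: quad1.
Qed.

Lemma quad_ge0 (s : {ffun 'I_N -> bool}) :
  0 <= \sum_(i < N) \sum_(j < N) `|g i j| + 2 * SK_H g s.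
Proof.
rewrite -quad2 -big_split /=; apply: sumr_ge0 => i _.
rewrite -big_split /=; apply: sumr_ge0 => j _.
have : `|g i j * spin (s i) * spin (s j)| = `|g i j| by rewrite !normrM !norm_spin !mulr1.
move=> <-; have := ler_norm (- (g i j * spin (s i) * spin (s j))); rewrite normrN; lra.
Qed.
End quad.

Theorem mainTheorem1 (R : realType) (N : nat) (beta h : R) (g : 'M[R]_N)
  (d : measure_display) (Omega : measurableType d) (P : probability Omega R)
  (X : Omega -> 'I_N -> R) :
  0 < beta ->
  g^T = g ->
  (forall i : 'I_N, g i i = 0) ->
  centered_gaussian_vector P (SK_cov g) X ->
  (\int[P]_w (expR (\sum_(i < N) logcosh (h + Num.sqrt beta * X w i)))%:E)%E
  = (expR (NfN g beta h + beta / 2 * \sum_(i < N) \sum_(j < N) `|g i j|))%:E.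
Proof.
move=> hb gT gd hX.
have gs : forall i j, g j i = g i j by move=> i j; rewrite -[in RHS]gT mxE.
have mX := hX.1.
pose c (s : {ffun 'I_N -> bool}) := (2 ^+ N)^-1 * expR (h * \sum_(i < N) spin (s i)).
pose u (s : {ffun 'I_N -> bool}) i := Num.sqrt beta * spin (s i).
pose q (s : {ffun 'I_N -> bool}) := \sum_(i < N) \sum_(j < N) `|g i j| + 2 * SK_H g s.
have hv s : \sum_(i < N) \sum_(j < N) u s i * SK_cov g i j * u s j = beta * q s.
  rewrite /q -quad // mulr_sumr; apply: eq_bigr => i _; rewrite mulr_sumr.
  apply: eq_bigr => j _; rewrite /u.
  have sb : Num.sqrt beta * Num.sqrt beta = beta by rewrite -expr2 sqr_sqrtr // ltW.
  rewrite -[in RHS]sb; ring.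
have c0 s : 0 <= c s by rewrite /c mulr_ge0 ?expR_ge0 // invr_ge0 exprn_ge0.
have mY s : measurable_fun setT (fun w => expR (\sum_(i < N) u s i * X w i)).
  apply: measurableT_comp; first exact: measurable_expR.
  by apply: measurable_sum => i; apply: measurable_funM => //; exact: mX.
transitivity (\int[P]_w (\sum_(s : {ffun 'I_N -> bool})
                 (c s * expR (\sum_(i < N) u s i * X w i))%:E))%E.
  apply: eq_integral => w _; rewrite sumEFin; congr EFin.
  rewrite expR_logcosh_sum; apply: eq_bigr => s _.
  rewrite /c -mulrA -expRD; congr (_ * expR _).
  rewrite /u mulr_sumr -big_split; apply: eq_bigr => i _ /=; ring.
rewrite ge0_integral_sum //; last 2 first.
- move=> s; apply: (proj2 (measurable_EFinP _ (fun w => c s * expR (\sum_(i < N) u s i * X w i)))).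
  exact: measurable_funM.
- by move=> s w _; rewrite lee_fin mulr_ge0 ?expR_ge0.
transitivity (\sum_(s : {ffun 'I_N -> bool}) (c s * expR (beta * q s / 2))%:E)%E.
  apply: eq_bigr => s _.
  under eq_integral do rewrite EFinM.
  rewrite ge0_integralZl //.
  - rewrite (@gauss_lin_mgf R N (SK_cov g) d Omega P X (u s) hX); first by rewrite hv EFinM.
    by rewrite hv; apply: mulr_ge0; [exact: ltW | exact: (@quad_ge0 R N g gs gd s)].
  - exact: (proj2 (measurable_EFinP _ (fun w => expR (\sum_(i < N) u s i * X w i))) (mY s)).
  - by rewrite lee_fin.
rewrite sumEFin; congr EFin.
rewrite /NfN expRD lnK; last first.
  rewrite posrE (bigD1 [ffun => true]) //=.
  have h1 : 0 < (2 ^+ N)^-1 * expR (beta * SK_H g [ffun => true] + h * \sum_(i < N) spin ([ffun => true] i)) :> R.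
    by rewrite mulr_gt0 ?expR_gt0 // invr_gt0 exprn_gt0.
  have h2 : 0 <= \sum_(s0 | s0 != [ffun => true]) (2 ^+ N)^-1 * expR (beta * SK_H g s0 + h * \sum_(i < N) spin (s0 i)) :> R.
    by apply: sumr_ge0 => s _; rewrite mulr_ge0 ?expR_ge0 // invr_ge0 exprn_ge0.
  lra.
rewrite mulr_suml; apply: eq_bigr => s _.
rewrite /c /q -!mulrA -!expRD; congr (_ * expR _).
by field.
Qed.
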